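(* Let $G$ be a finite simple graph containing two vertices $u$ and $v$ such that there is a unique path in $G$ between $u$ and $v$, this path has length at least $7$, and every inner vertex of this path has degree $2$ in $G$. Then $G$ has at least one adjacency eigenvalue that is not an integer. *)

(* Defs.v *)
From HB Require Import structures.
From mathcomp Require Import all_boot all_order all_algebra all_field.
Set Implicit Arguments. Unset Strict Implicit. Unset Printing Implicit Defensive.
Import Order.TTheory GRing.Theory Num.Theory.

Definition simple_graph (n : nat) (e : rel 'I_n) : Prop :=
  symmetric e /\ irreflexive e.

Definition adjmx (n : nat) (e : rel 'I_n) : 'M[algC]_n :=
  \matrix_(i, j) ((e i j)%:R)%R.

Definition deg (n : nat) (e : rel 'I_n) (x : 'I_n) : nat := #|[set y | e x y]|.

(* p is (the list of vertices after u of) a path from u to v in e: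
   u :: p is a sequence of distinct vertices, consecutive ones adjacent,
   ending at v. Its length (number of edges) is size p. *)
Definition is_path (n : nat) (e : rel 'I_n) (u v : 'I_n) (p : seq 'I_n) : bool :=
  [&& path e u p, last u p == v & uniq (u :: p)].

(* inner vertices of the path u :: p : all except the endpoints u and last u p *)
Definition inner_vertices (n : nat) (u : 'I_n) (p : seq 'I_n) : seq 'I_n :=
  behead (belast u p).

(* Main.v *)
Require Import Defs.
From HB Require Import structures.
From mathcomp Require Import all_boot all_order all_algebra all_field.
From mathcomp Require Import sesquilinear spectral zify ring.
Import Order.TTheory GRing.Theory Num.Theory.
Set Implicit Arguments. Unset Strict Implicit. Unset Printing Implicit Defensive.
Local Open Scope ring_scope.
Local Open Scope sesquilinear_scope.
From Stdlib Require Classical_Prop.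

Lemma nbr n (e : rel 'I_n) (y a b : 'I_n) : deg e y = 2%N -> e y a -> e y b ->
  a != b -> (delta_mx 0 y : 'rV[algC]_n) *m adjmx e = delta_mx 0 a + delta_mx 0 b.
Proof.
move=> hd ha hb hab.
have S : [set z | e y z] = [set a; b].
  apply/eqP; rewrite eq_sym eqEcard; apply/andP; split.
    by apply/subsetP => z; rewrite !inE => /orP[]/eqP->.
  by rewrite cards2 hab; move: hd; rewrite /deg => ->.
rewrite -rowE; apply/rowP => j; rewrite !mxE.
have -> : e y j = (j \in [set z | e y z]) by rewrite inE.
rewrite S in_set2 !eqxx /=.
case: (j =P a) => [ja|_]; case: (j =P b) => [jb|_] //=.
- by move: hab; rewrite -ja -jb eqxx.
- by rewrite addr0.
- by rewrite add0r.
- by rewrite addr0.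
Qed.

Definition vec n (x : nat -> 'I_n) (c : seq nat) : 'rV[algC]_n :=
  \sum_(i < 8) (nth 0%N c i)%:R *: delta_mx 0 (x i).

Lemma dot_vec n (x : nat -> 'I_n) c c' :
  (forall i j, (i < 8)%N -> (j < 8)%N -> x i = x j -> i = j) ->
  (vec x c *m (vec x c')^T) 0 0 = (\sum_(i < 8) nth 0%N c i * nth 0%N c' i)%N%:R.
Proof.
move=> xinj.
rewrite /vec raddf_sum /= mulmx_suml summxE natr_sum.
apply: eq_bigr => i _; rewrite mulmx_sumr summxE (bigD1 i) //= big1 ?addr0.
  by rewrite linearZ /= -scalemxAl -scalemxAr trmx_delta mul_delta_mx !mxE !eqxx natrM mulr1.
move=> j hji; rewrite linearZ /= -scalemxAl -scalemxAr trmx_delta mul_delta_mx_cond.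
have -> : (x i == x j) = false.
  apply/negbTE/eqP => /xinj h; move: hji; rewrite -(inj_eq val_inj) /= eq_sym => /eqP; apply.
  by rewrite h.
rewrite mulr0n !mxE.
by rewrite !mulr0.

Qed.

Lemma key n (A : 'M[algC]_n) : A \is symmetricmx -> A \is a realmx ->
  (forall a, eigenvalue A a -> a \is a Num.int) ->
  forall f : 'rV[algC]_n, 0 <= (f *m ((A - 1%:M) *m (A - 2%:M)) *m f^t*) 0 0.
Proof.
move=> Asym Areal Aint f.
have /orthomx_spectralP hA := symmetric_normalmx Asym Areal.
set P := spectralmx A in hA; set d := spectral_diag A in hA.
have PU : P \is unitarymx by apply: spectral_unitarymx.
have Pu : P \in unitmx by apply: spectral_unit.
have iP : invmx P = P^t* by apply: invmx_unitary.
have PPt : P *m P^t* = 1%:M by apply/unitarymxP.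
have PtP : P^t* *m P = 1%:M by rewrite -iP mulVmx.
rewrite iP in hA.
have hAc c : A - c%:M = P^t* *m diag_mx (d - const_mx c) *m P.
  rewrite linearB /= diag_const_mx mulmxBr mulmxBl -hA.
  by rewrite mul_mx_scalar -scalemxAl PtP scalemx1.
have hd i : (d 0 i - 1) * (d 0 i - 2) >= 0.
  have : d 0 i \is a Num.int.
    apply: Aint; apply/eigenvalueP; exists (delta_mx 0 i *m P).
      rewrite hA !mulmxA -(mulmxA _ P) PPt mulmx1.
      by rewrite -[delta_mx 0 i *m diag_mx d]rowE row_diag_mx scalemxAl.
    apply/negP => /eqP h0.
    have := congr1 (fun M => M *m P^t*) h0.
    rewrite -mulmxA PPt mulmx1 mul0mx => /matrixP/(_ 0 i).
    by rewrite !mxE !eqxx /= => /eqP; rewrite oner_eq0.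
  case/intrP => m ->.
  have -> : (m%:~R - 1) * (m%:~R - 2) = ((m - 1) * (m - 2))%:~R :> algC.
    by rewrite rmorphM /= !rmorphB /=.
  rewrite ler0z; case: (ltrP m 2) => hm.
    by apply: mulr_le0; lia.
  by apply: mulr_ge0; lia.
rewrite !hAc.
rewrite -!mulmxA (mulmxA P) PPt mul1mx.
rewrite (mulmxA (diag_mx _)) mulmx_diag.
have gt : (f *m P^t*)^t* = P *m f^t*.
  by rewrite trmx_mul map_mxM trmxCK.
rewrite !mulmxA -(mulmxA _ P) -gt mul_mx_diag.
rewrite !mxE; apply: sumr_ge0 => j _; rewrite !mxE.
rewrite mulrAC; apply: mulr_ge0; last exact: hd.
exact: mul_conjC_ge0.
Qed.

Lemma facts (n : nat) (e : rel 'I_n) (u v : 'I_n) (p : seq 'I_n) :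
  simple_graph e ->
  is_path e u v p ->
  (7 <= size p)%N ->
  (forall x : 'I_n, x \in inner_vertices u p -> deg e x = 2%N) ->
  forall x : nat -> 'I_n, (forall i, x i = nth u (u :: p) i) ->
  (forall i j, (i < 8)%N -> (j < 8)%N -> x i = x j -> i = j) /\
  (forall i, (0 < i < 7)%N -> (delta_mx 0 (x i) : 'rV[algC]_n) *m adjmx e
       = delta_mx 0 (x i.-1) + delta_mx 0 (x i.+1)).
Proof.
move=> [esym eirr] /and3P[hpath _ huniq] hsz hdeg x hx.
have xinj : forall i j, (i < 8)%N -> (j < 8)%N -> x i = x j -> i = j.
  move=> i j hi hj /eqP; rewrite !hx nth_uniq //= => [/eqP//||]; lia.
split=> // i /andP[hi0 hi7].
have hedge : forall k, (k < size p)%N -> e (x k) (x k.+1).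
  by move=> k hk; rewrite !hx; move/(pathP u): hpath; apply.
apply: nbr.
- apply: hdeg; rewrite /inner_vertices hx.
  have -> : nth u (u :: p) i = nth u (belast u p) i.
    rewrite lastI nth_rcons size_belast; case: ifP => //.
    move/negbT; rewrite -leqNgt => h; lia.
  case: i hi0 hi7 => [//|i] _ hi7.
  rewrite -nth_behead; apply: mem_nth; rewrite size_behead size_belast.
  rewrite -subn1; move: hsz hi7; clear; move: (size p) => s; move: s i; lia.
- case: i hi0 hi7 => [//|i] _ hi7; rewrite esym /=; apply: (hedge i); lia.
- apply: hedge; lia.
- apply/eqP => /xinj; lia.
Qed.

Lemma vec8 n (x : nat -> 'I_n) c : vec x c =
  (nth 0 c 0)%:R *: delta_mx 0 (x 0%N) + ((nth 0 c 1)%:R *: delta_mx 0 (x 1%N) +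
  ((nth 0 c 2)%:R *: delta_mx 0 (x 2%N) + ((nth 0 c 3)%:R *: delta_mx 0 (x 3%N) +
  ((nth 0 c 4)%:R *: delta_mx 0 (x 4%N) + ((nth 0 c 5)%:R *: delta_mx 0 (x 5%N) +
  ((nth 0 c 6)%:R *: delta_mx 0 (x 6%N) + ((nth 0 c 7)%:R *: delta_mx 0 (x 7%N) + 0))))))).
Proof. by rewrite /vec !big_ord_recl big_ord0. Qed.

Lemma dot_vec_mx n (x : nat -> 'I_n) c c' :
  (forall i j, (i < 8)%N -> (j < 8)%N -> x i = x j -> i = j) ->
  vec x c *m (vec x c')^T = ((\sum_(i < 8) nth 0%N c i * nth 0%N c' i)%N%:R)%:M.
Proof.
move=> xinj; apply/matrixP => i j; rewrite !ord1 dot_vec // mxE eqxx mulr1n //.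
Qed.

Local Close Scope sesquilinear_scope.
Local Close Scope ring_scope.

Theorem theorem18 (n : nat) (e : rel 'I_n) (u v : 'I_n) (p : seq 'I_n) :
  simple_graph e ->
  is_path e u v p ->
  (forall q : seq 'I_n, is_path e u v q -> q = p) ->
  7 <= size p ->
  (forall x : 'I_n, x \in inner_vertices u p -> deg e x = 2) ->
  exists a : algC, eigenvalue (adjmx e) a && (a \isn't a Num.int).
Proof.
Local Open Scope ring_scope.
Local Open Scope sesquilinear_scope.
move=> hsg hp _ hsz hdeg.
pose x := fun i => nth u (u :: p) i.
have [xinj hnb] := facts hsg hp hsz hdeg (fun i => erefl : x i = _).
clearbody x.
set A := adjmx e.
have [esym _] := hsg.
have Asym : A \is symmetricmx.
  apply/is_hermitianmxP; rewrite expr0 scale1r; apply/matrixP => i j.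
  by rewrite !mxE esym.
have Areal : A \is a realmx by apply/mxOverP => i j; rewrite mxE realn.
apply: Classical_Prop.NNPP => hno.
have Aint : forall a, eigenvalue A a -> a \is a Num.int.
  move=> a ha; apply/negPn/negP => hn; apply: hno; exists a; by rewrite ha.
set f := vec x [:: 0; 1; 3; 4; 4; 3; 1; 0]%N.
have fA : f *m A = vec x [:: 1; 3; 5; 7; 7; 5; 3; 1]%N.
  rewrite /f !vec8 !mulmxDl mul0mx /=.
  rewrite -!scalemxAl (hnb 1%N erefl) (hnb 2%N erefl) (hnb 3%N erefl).
  rewrite (hnb 4%N erefl) (hnb 5%N erefl) (hnb 6%N erefl) /=.
  apply/rowP => j; rewrite !mxE.
  ring.
have freal : f^t* = f^T.
  apply/matrixP => i j; rewrite !mxE /f /vec summxE rmorph_sum.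
  by apply: eq_bigr => k _; rewrite !mxE rmorphM /= !conjC_nat.
have AT : A^T = A.
  by apply/matrixP => i j; rewrite !mxE esym.
have := key Asym Areal Aint f.
rewrite freal.
have -> : f *m ((A - 1%:M) *m (A - 2%:M)) *m f^T =
    (f *m A) *m (f *m A)^T - 3%:R *: ((f *m A) *m f^T) + 2%:R *: (f *m f^T).
  rewrite trmx_mul AT mulmxBl !mulmxBr mul1mx mul_mx_scalar.
  rewrite !mulmxBl mul1mx mul_mx_scalar -!scalemxAr -!scalemxAl !mulmxA.
  apply/matrixP => i j; rewrite !mxE; ring.
rewrite fA /f !dot_vec_mx // !mxE !eqxx !mulr1n.
rewrite !big_ord_recl !big_ord0 /= => h.
set t := (X in 0 <= X) in h.
have E : t = - 4%:R.
  rewrite /t !natrD !natrM; ring.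
have h4 : (0 : algC) < 4%:R by rewrite ltr0n.
by move: h; rewrite E oppr_ge0 (lt_geF h4).
Qed.
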